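(* Let $(X,\varphi)$ be a convex geometry and suppose the lattice $L:=Cl(X,\varphi)$ is weakly atomic. Then $L$ is spatial. Moreover, there exist a subset $Y\subseteq X$ and a closure operator $\psi$ on $Y$ satisfying the anti-exchange axiom such that $L$ is isomorphic to $Cl(Y,\psi)$ and $\psi(\{y\})$ is completely join-irreducible in $Cl(Y,\psi)$ for every $y\in Y$.
   Context: A convex geometry is a pair $(X,\varphi)$ where $X$ is a non-empty set and $\varphi$ is a closure operator on $X$ with $\varphi(\emptyset)=\emptyset$ satisfying the anti-exchange axiom: for all $\varphi$-closed $A$ and all $x\neq y$ in $X$, if $x\in\varphi(A\cup\{y\})$ and $x\notin A$ then $y\notin\varphi(A\cup\{x\})$. $Cl(X,\varphi)$ is the complete lattice of $\varphi$-closed sets ordered by inclusion. A lattice is weakly atomic if every interval $[a,b]$ with $a<b$ contains a cover $c\prec d$. An element $y$ of a complete lattice is completely join-irreducible if it has a lower cover $y_*$ such that $z<y$ implies $z\leq y_*$. A complete lattice is spatial if every element is a join of completely join-irreducible elements. *)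

(* Defs.v *)
(* sets are predicates T -> Prop; set equality is Leibniz
   (with functional/propositional extensionality available). *)
Set Implicit Arguments.

Definition subset {T : Type} (A B : T -> Prop) : Prop := forall x, A x -> B x.
Definition proper {T : Type} (A B : T -> Prop) : Prop := subset A B /\ ~ subset B A.
Definition emptyset {T : Type} : T -> Prop := fun _ => False.
Definition single {T : Type} (a : T) : T -> Prop := fun x => x = a.
Definition add {T : Type} (A : T -> Prop) (a : T) : T -> Prop := fun x => A x \/ x = a.

Section ClosureSystems.
Variable T : Type.
Variable phi : (T -> Prop) -> (T -> Prop).

Definition closure_operator : Prop :=
  (forall A, subset A (phi A)) /\
  (forall A B, subset A B -> subset (phi A) (phi B)) /\
  (forall A, phi (phi A) = phi A).

Definition closed (A : T -> Prop) : Prop := phi A = A.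

Definition anti_exchange : Prop :=
  forall (A : T -> Prop) (x y : T), closed A -> x <> y ->
    phi (add A y) x -> ~ A x -> ~ phi (add A x) y.

Definition convex_geometry : Prop :=
  inhabited T /\ closure_operator /\ phi emptyset = emptyset /\ anti_exchange.

(* The lattice Cl(T, phi): closed sets ordered by inclusion. *)

Definition covers (c d : T -> Prop) : Prop :=
  closed c /\ closed d /\ proper c d /\
  forall e, closed e -> proper c e -> proper e d -> False.

Definition weakly_atomic : Prop :=
  forall a b, closed a -> closed b -> proper a b ->
    exists c d, subset a c /\ subset d b /\ covers c d.

Definition compl_join_irreducible (y : T -> Prop) : Prop :=
  closed y /\ exists ys, covers ys y /\ forall z, closed z -> proper z y -> subset z ys.

Definition is_join (S : (T -> Prop) -> Prop) (A : T -> Prop) : Prop :=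
  closed A /\ (forall y, S y -> subset y A) /\
  (forall B, closed B -> (forall y, S y -> subset y B) -> subset A B).

Definition spatial : Prop :=
  forall A, closed A -> exists S : (T -> Prop) -> Prop,
    (forall y, S y -> closed y /\ compl_join_irreducible y) /\ is_join S A.
End ClosureSystems.

Definition lattice_iso {T U : Type} (phi : (T -> Prop) -> (T -> Prop))
  (psi : (U -> Prop) -> (U -> Prop)) : Prop :=
  exists f : (T -> Prop) -> (U -> Prop),
    (forall A, closed phi A -> closed psi (f A)) /\
    (forall B, closed psi B -> exists A, closed phi A /\ f A = B) /\
    (forall A A', closed phi A -> closed phi A' ->
       (subset A A' <-> subset (f A) (f A'))).

(* Main.v *)
Require Import Defs.
From Stdlib Require Import Classical FunctionalExtensionality PropExtensionality ProofIrrelevance.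

Lemma set_ext {T : Type} (A B : T -> Prop) : (forall x, A x <-> B x) -> A = B.
Proof.
  intro H; apply functional_extensionality; intro x; apply propositional_extensionality; auto.
Qed.

Lemma closed_inter {T : Type} (phi : (T -> Prop) -> (T -> Prop)) A B :
  closure_operator phi -> closed phi A -> closed phi B ->
  closed phi (fun z => A z /\ B z).
Proof.
  intros [ext [mono idem]] HA HB. unfold closed in *.
  apply set_ext; intro x; split; [|intro Hx; apply ext; exact Hx].
  intro H; split.
  - rewrite <- HA. revert H; apply mono; intros y [? ?]; auto.
  - rewrite <- HB. revert H; apply mono; intros y [? ?]; auto.
Qed.

Lemma cover_single {T : Type} (phi : (T -> Prop) -> (T -> Prop)) c d e z :
  closure_operator phi -> anti_exchange phi -> covers phi c d ->
  d e -> ~ c e -> d z -> ~ c z -> z = e.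
Proof.
  intros [ext [mono idem]] ae [Hc [Hd [[s ns] nob]]] de ce dz cz.
  apply NNPP; intro Hne.
  assert (K : forall w, d w -> ~ c w -> subset d (phi (add c w))).
  { intros w dw cw. apply NNPP; intro H.
    apply (nob (phi (add c w))).
    - apply idem.
    - split.
      + intros u cu. apply ext. left; auto.
      + intro H'. apply cw. apply H'. apply ext. right; auto.
    - split.
      + rewrite <- Hd. apply mono. intros u [cu | ->]; auto.
      + auto. }
  apply (ae c z e Hc Hne (K e de ce z dz) cz (K z dz cz e de)).
Qed.

Lemma key {T : Type} (phi : (T -> Prop) -> (T -> Prop)) A B x :
  convex_geometry phi -> weakly_atomic phi -> closed phi A -> closed phi B ->
  A x -> ~ B x ->
  exists e, A e /\ ~ B e /\ compl_join_irreducible phi (phi (single e)).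
Proof.
  intros [_ [co [_ ae]]] wa HA HB Ax Bx.
  pose proof co as [ext [mono idem]].
  destruct (wa (fun z => A z /\ B z) A (closed_inter phi A B co HA HB) HA) as [c [d [bc [dA cov]]]].
  { split. intros u [? ?]; auto. intro H. apply Bx. apply (H x Ax). }
  pose proof cov as [Hc [Hd [[s ns] nob]]].
  destruct (not_all_ex_not _ _ ns) as [e He].
  assert (de : d e) by (apply NNPP; intro; apply He; intro; contradiction).
  assert (ce : ~ c e) by (intro; apply He; auto).
  exists e. split; [auto|]. split.
  { intro Be. apply ce. apply bc. auto. }
  assert (yd : subset (phi (single e)) d).
  { rewrite <- Hd. apply mono. intros u ->; auto. }
  assert (low : forall z, closed phi z -> proper z (phi (single e)) ->
            subset z (fun w => phi (single e) w /\ c w)).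
  { intros z Hz [sz nz] w zw. split; [auto|].
    assert (ez : ~ z e).
    { intro ze. apply nz. rewrite <- Hz. apply mono. intros u ->; auto. }
    apply NNPP; intro cw.
    assert (w = e) by (apply (cover_single phi c d e w co ae cov de ce); auto).
    subst; auto. }
  split; [apply idem|].
  exists (fun w => phi (single e) w /\ c w). split; [|auto].
  assert (Cys : closed phi (fun w => phi (single e) w /\ c w)).
  { apply closed_inter; auto. apply idem. }
  split; [auto|]. split; [apply idem|]. split.
  - split. intros u [? ?]; auto. intro H. apply ce. apply (H e). apply ext. reflexivity.
  - intros f Hf [s1 n1] [s2 n2]. apply n1. apply low; auto. split; auto.
Qed.

Lemma cji_transfer {T U : Type} (phi : (T -> Prop) -> (T -> Prop))
  (psi : (U -> Prop) -> (U -> Prop)) (f : (T -> Prop) -> (U -> Prop)) :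
  (forall A, closed phi A -> closed psi (f A)) ->
  (forall B, closed psi B -> exists A, closed phi A /\ f A = B) ->
  (forall A A', closed phi A -> closed phi A' -> (subset A A' <-> subset (f A) (f A'))) ->
  forall y, compl_join_irreducible phi y -> compl_join_irreducible psi (f y).
Proof.
  intros cl surj ord y [Hy [ys [[Hys [_ [[s ns] nob]]] low]]].
  split; [auto|]. exists (f ys). split.
  - split; [auto|]. split; [auto|]. split.
    + split. apply ord; auto. intro H. apply ns. apply ord; auto.
    + intros e He [s1 n1] [s2 n2]. destruct (surj e He) as [E [HE <-]].
      apply (nob E HE).
      * split. apply ord; auto. intro H; apply n1; apply ord; auto.
      * split. apply ord; auto. intro H; apply n2; apply ord; auto.
  - intros z Hz [s1 n1]. destruct (surj z Hz) as [Z [HZ <-]].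
    apply ord; auto. apply low; auto. split. apply ord; auto.
    intro H; apply n1; apply ord; auto.
Qed.

Theorem theorem3p1 (X : Type) (phi : (X -> Prop) -> (X -> Prop)) :
  convex_geometry phi -> weakly_atomic phi ->
  spatial phi /\
  exists (Y : X -> Prop) (psi : ({x : X | Y x} -> Prop) -> ({x : X | Y x} -> Prop)),
    closure_operator psi /\ anti_exchange psi /\
    lattice_iso phi psi /\
    (forall y : {x : X | Y x}, compl_join_irreducible psi (psi (single y))).
Proof.
  intros cg wa.
  pose proof cg as [_ [co [_ ae]]].
  pose proof co as [ext [mono idem]].
  split.
  { intros A HA.
    exists (fun y => exists e, A e /\ y = phi (single e) /\ compl_join_irreducible phi y).
    split.
    - intros y [e [_ [-> H]]]. split; [apply idem | auto].
    - split; [auto|]. split.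
      + intros y [e [Ae [-> _]]]. rewrite <- HA. apply mono. intros u ->; auto.
      + intros B HB Hup x Ax. apply NNPP; intro Bx.
        destruct (key phi _ _ _ cg wa HA HB Ax Bx) as [e [Ae [Be Hcji]]].
        apply Be. apply (Hup (phi (single e))).
        * exists e; auto.
        * apply ext. reflexivity. }
  set (Y := fun e => compl_join_irreducible phi (phi (single e))).
  set (img := fun S : {x : X | Y x} -> Prop => fun x => exists y, S y /\ proj1_sig y = x).
  set (psi := fun S : {x : X | Y x} -> Prop => fun y : {x : X | Y x} => phi (img S) (proj1_sig y)).
  set (f := fun (A : X -> Prop) (y : {x : X | Y x}) => A (proj1_sig y)).
  assert (img_sub : forall S A, subset S (f A) -> subset (img S) A).
  { intros S A H x [y [Sy <-]]. apply H; auto. }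
  assert (psi_ext : forall S, subset S (psi S)).
  { intros S y Sy. unfold psi. apply ext. exists y; auto. }
  assert (img_psi : forall S, phi (img (psi S)) = phi (img S)).
  { intro S. apply set_ext; intro x; split.
    - intro H. rewrite <- (idem (img S)). revert H. apply mono. apply img_sub. intros y H; exact H.
    - apply mono. intros u [y [Sy <-]]. exists y; split; [apply psi_ext; exact Sy | reflexivity]. }
  assert (Fcl : forall A, closed phi A -> closed psi (f A)).
  { intros A HA. unfold closed. apply set_ext; intro y; split.
    - unfold psi. intro H. unfold f. rewrite <- HA.
      apply (mono (img (f A))); auto. apply img_sub. intros u Hu; auto.
    - apply psi_ext. }
  assert (Fsurj : forall B, closed psi B -> exists A, closed phi A /\ f A = B).
  { intros B HB. exists (phi (img B)). split. apply idem. exact HB. }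
  assert (Ford : forall A A', closed phi A -> closed phi A' ->
     (subset A A' <-> subset (f A) (f A'))).
  { intros A A' HA HA'. split.
    - intros H y. unfold f. apply H.
    - intros H x Ax. apply NNPP; intro Bx.
      destruct (key phi _ _ _ cg wa HA HA' Ax Bx) as [e [Ae [Be Hcji]]].
      apply Be. apply (H (exist _ e Hcji)). exact Ae. }
  exists Y, psi. split; [|split; [|split]].
  - split; [auto|]. split.
    + intros A B H y. unfold psi. apply mono. intros x [u [Au <-]]. exists u; auto.
    + intro A. apply set_ext; intro y. unfold psi at 1. rewrite img_psi. tauto.
  - intros A x y HA Hxy Hx nAx Hy.
    assert (vne : proj1_sig x <> proj1_sig y).
    { intro E. apply Hxy. destruct x, y; simpl in E; subst. f_equal. apply proof_irrelevance. }
    set (A' := phi (img A)).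
    apply (ae A' (proj1_sig x) (proj1_sig y) (idem _) vne).
    + unfold psi in Hx. revert Hx. apply mono.
      intros u [v [[Av | ->] <-]]. left. apply ext. exists v; auto. right; auto.
    + intro H. apply nAx. rewrite <- HA. exact H.
    + unfold psi in Hy. revert Hy. apply mono.
      intros u [v [[Av | ->] <-]]. left. apply ext. exists v; auto. right; auto.
  - exists f. auto.
  - intro y.
    assert (E : psi (single y) = f (phi (single (proj1_sig y)))).
    { unfold psi, f. f_equal.
      apply functional_extensionality; intro z. f_equal. apply set_ext; intro x; split.
      - intros [v [-> <-]]. reflexivity.
      - intros ->. exists y; split; reflexivity. }
    rewrite E. apply (cji_transfer phi psi f Fcl Fsurj Ford). exact (proj2_sig y).
Qed.
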